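(* Let $K\subseteq\mathbb{R}^n$ be a closed convex cone that is facially exposed, and let $F$ be a face of $K$ with $F=\operatorname{cone}\{p_1,p_2\}=\{\alpha p_1+\beta p_2:\alpha,\beta\ge0\}$ for some linearly independent $p_1,p_2\in\mathbb{R}^n$. Then $K^*+F^\perp$ is closed.
   Context: $\mathbb{R}^n$ is identified with its dual. A face of $K$ is a closed convex $F\subseteq K$ such that $x\in F$, $y,z\in K$, $x\in(y,z)$ imply $y,z\in F$; it is exposed if $F=K\cap H$ for some supporting hyperplane $H$; $K$ is facially exposed if every nonempty face $F\ne K$ is exposed. $K^*=\{s:\langle s,x\rangle\ge0\ \forall x\in K\}$, $F^\perp=\{s:\langle s,x\rangle=0\ \forall x\in F\}$. *)

(* Defs.v *)
From mathcomp Require Import all_boot.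
From Stdlib Require Import Reals.
Open Scope R_scope.

Definition vec (n : nat) := 'I_n -> R.

Definition vzero {n} : vec n := fun _ => 0.
Definition vadd {n} (x y : vec n) : vec n := fun i => x i + y i.
Definition vscale {n} (a : R) (x : vec n) : vec n := fun i => a * x i.
Definition vsub {n} (x y : vec n) : vec n := fun i => x i - y i.

(* Standard inner product (R^n identified with its dual). *)
Definition inner {n} (x y : vec n) : R := \big[Rplus/0]_(i < n) (x i * y i).

Definition norm {n} (x : vec n) : R := sqrt (inner x x).

Definition is_closed {n} (S : vec n -> Prop) : Prop :=
  forall x, (forall eps, 0 < eps -> exists y, S y /\ norm (vsub x y) < eps) -> S x.

Definition is_convex {n} (S : vec n -> Prop) : Prop :=
  forall x y t, S x -> S y -> 0 <= t <= 1 ->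
    S (vadd (vscale t x) (vscale (1 - t) y)).

Definition is_convex_cone {n} (K : vec n -> Prop) : Prop :=
  K vzero /\
  (forall x y, K x -> K y -> K (vadd x y)) /\
  (forall a x, 0 <= a -> K x -> K (vscale a x)).

Definition is_closed_convex_cone {n} (K : vec n -> Prop) : Prop :=
  is_convex_cone K /\ is_closed K.

Definition subset {n} (A B : vec n -> Prop) : Prop := forall x, A x -> B x.
Definition set_eq {n} (A B : vec n -> Prop) : Prop := forall x, A x <-> B x.

Definition in_open_segment {n} (x y z : vec n) : Prop :=
  exists t, 0 < t < 1 /\ x = vadd (vscale t y) (vscale (1 - t) z).

Definition is_face {n} (K F : vec n -> Prop) : Prop :=
  subset F K /\ is_closed F /\ is_convex F /\
  forall x y z, F x -> K y -> K z -> in_open_segment x y z -> F y /\ F z.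

Definition exposed_face {n} (K F : vec n -> Prop) : Prop :=
  exists (s : vec n) (b : R),
    s <> vzero /\
    (forall x, K x -> b <= inner s x) /\
    set_eq F (fun x => K x /\ inner s x = b).

Definition facially_exposed {n} (K : vec n -> Prop) : Prop :=
  forall F, is_face K F -> (exists x, F x) -> ~ set_eq F K -> exposed_face K F.

Definition dual_cone {n} (K : vec n -> Prop) : vec n -> Prop :=
  fun s => forall x, K x -> 0 <= inner s x.

Definition perp {n} (F : vec n -> Prop) : vec n -> Prop :=
  fun s => forall x, F x -> inner s x = 0.

Definition minkowski_sum {n} (A B : vec n -> Prop) : vec n -> Prop :=
  fun z => exists a b, A a /\ B b /\ z = vadd a b.

Definition cone2 {n} (p1 p2 : vec n) : vec n -> Prop :=
  fun x => exists a b, 0 <= a /\ 0 <= b /\ x = vadd (vscale a p1) (vscale b p2).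

Definition lin_indep2 {n} (p1 p2 : vec n) : Prop :=
  forall a b, vadd (vscale a p1) (vscale b p2) = vzero -> a = 0 /\ b = 0.

(* Main.v *)
Require Import Defs.
From HB Require Import structures.
From mathcomp Require Import all_boot.
From Stdlib Require Import Reals Lra FunctionalExtensionality Classical.
Open Scope R_scope.
Set Implicit Arguments.

HB.instance Definition _ := Monoid.isComLaw.Build R 0%R Rplus (fun a b c => esym (Rplus_assoc a b c)) Rplus_comm Rplus_0_l.

Lemma inner_comm n (x y : vec n) : inner x y = inner y x.
Proof. unfold inner; apply: eq_bigr => i _; ring. Qed.

Lemma inner_addl n (x y z : vec n) : inner (vadd x y) z = inner x z + inner y z.
Proof.
unfold inner, vadd.
apply: (big_rec3 (fun a b c => a = b + c)); first by ring.
move=> i a b c _ ->; ring.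
Qed.

Lemma inner_subl n (x y z : vec n) : inner (vsub x y) z = inner x z - inner y z.
Proof.
unfold inner, vsub.
apply: (big_rec3 (fun a b c => a = b - c)); first by ring.
move=> i a b c _ ->; ring.
Qed.

Lemma inner_scalel n a (x z : vec n) : inner (vscale a x) z = a * inner x z.
Proof.
unfold inner, vscale.
apply: (big_rec2 (fun b c => b = a * c)); first by ring.
move=> i b c _ ->; ring.
Qed.

Lemma inner_zerol n (z : vec n) : inner vzero z = 0.
Proof.
unfold inner, vzero.
apply: (big_rec (fun b => b = 0)) => // i b _ ->; ring.
Qed.

Lemma inner_sq_ge0 n (x : vec n) : 0 <= inner x x.
Proof.
unfold inner.
apply: (big_rec (fun b => 0 <= b)); first lra.
move=> i b _ H; nra.
Qed.

Lemma coord_le n (x : vec n) i : x i * x i <= inner x x.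
Proof.
unfold inner. rewrite (bigD1 i) //=.
rewrite -{1}[x i * x i]Rplus_0_r; apply: Rplus_le_compat_l.
apply: (big_rec (fun b => 0 <= b)); first lra. move=> j b _ H; nra.
Qed.

Lemma inner_pos n (x : vec n) : x <> vzero -> 0 < inner x x.
Proof.
move=> Hx.
have [i Hi] : exists i, x i <> 0.
  apply: NNPP => H. apply: Hx. apply: functional_extensionality => i.
  unfold vzero. apply: NNPP => H'. apply: H. by exists i.
have := coord_le x i. nra.
Qed.

Lemma abs_coord_le n (x : vec n) i : Rabs (x i) <= norm x.
Proof.
unfold norm. rewrite -sqrt_Rsqr_abs. apply: sqrt_le_1_alt.
rewrite /Rsqr. apply: coord_le.
Qed.

Lemma inner_bound n (v p : vec n) :
  Rabs (inner v p) <= norm v * \big[Rplus/0]_(i < n) Rabs (p i).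
Proof.
unfold inner.
apply: (big_rec2 (fun a b => Rabs a <= norm v * b)).
  rewrite Rabs_R0 Rmult_0_r; lra.
move=> i a b _ H.
have H1 := abs_coord_le v i.
have H2 := Rabs_triang (v i * p i) a.
rewrite Rabs_mult in H2.
have H3 := Rabs_pos (p i).
have H4 := Rabs_pos (v i).
nra.
Qed.

Lemma approx_inner n (z p : vec n) (P : vec n -> Prop) :
  (forall eps, 0 < eps -> exists y, P y /\ norm (vsub z y) < eps) ->
  forall d, 0 < d -> exists y, P y /\ Rabs (inner z p - inner y p) < d.
Proof.
move=> H d Hd.
set M := \big[Rplus/0]_(i < n) Rabs (p i).
have HM : 0 <= M.
  rewrite /M. apply: (big_rec (fun b => 0 <= b)); first lra.
  move=> i b _ Hb; have := Rabs_pos (p i); lra.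
have He : 0 < d / (M + 1) by apply: Rdiv_lt_0_compat; lra.
have [y [Py Hy]] := H _ He.
exists y; split => //.
rewrite -inner_subl.
have := inner_bound (vsub z y) p. rewrite -/M => Hb.
have Hn : 0 <= norm (vsub z y) by apply: sqrt_pos.
have : norm (vsub z y) * (M + 1) < d.
  have := Rmult_lt_compat_r (M+1) _ _ ltac:(lra) Hy.
  rewrite /Rdiv Rmult_assoc Rinv_l; lra.
nra.
Qed.

Lemma closed_halfspace n (z p : vec n) (P : vec n -> Prop) :
  (forall eps, 0 < eps -> exists y, P y /\ norm (vsub z y) < eps) ->
  (forall y, P y -> 0 <= inner y p) -> 0 <= inner z p.
Proof.
move=> H HP. apply: Rnot_lt_le => Hlt.
have [y [Py Hy]] := @approx_inner n z p P H (- inner z p) ltac:(lra).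
have := HP y Py. have := Rle_abs (-(inner z p - inner y p)). rewrite Rabs_Ropp. lra.
Qed.

Lemma closed_hyperplane n (z p : vec n) (P : vec n -> Prop) :
  (forall eps, 0 < eps -> exists y, P y /\ norm (vsub z y) < eps) ->
  (forall y, P y -> inner y p = 0) -> inner z p = 0.
Proof.
move=> H HP. apply: NNPP => Hne.
have Ha : 0 < Rabs (inner z p) by apply: Rabs_pos_lt.
have [y [Py Hy]] := @approx_inner n z p P H _ Ha.
rewrite (HP y Py) Rminus_0_r in Hy. lra.
Qed.

Lemma inner_addr n (x y z : vec n) : inner z (vadd x y) = inner z x + inner z y.
Proof. by rewrite !(inner_comm z) inner_addl. Qed.
Lemma inner_scaler n a (x z : vec n) : inner z (vscale a x) = a * inner z x.
Proof. by rewrite !(inner_comm z) inner_scalel. Qed.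
Lemma inner_zeror n (z : vec n) : inner z vzero = 0.
Proof. by rewrite inner_comm inner_zerol. Qed.

Lemma ray_functional n (K F : vec n -> Prop) (p1 p2 : vec n) :
  is_closed_convex_cone K ->
  facially_exposed K ->
  is_face K F ->
  lin_indep2 p1 p2 ->
  set_eq F (cone2 p1 p2) ->
  exists y, dual_cone K y /\ inner y p1 = 1 /\ inner y p2 = 0.
Proof.
move=> [[K0 [Kadd Kscale]] Kcl] Hfe [FK [Fcl [Fcv Fface]]] Hli HF.
have Fp1 : F p1.
  apply/HF; exists 1, 0; split; first lra; split; first lra.
  apply: functional_extensionality => i; rewrite /vadd /vscale; ring.
have Fp2 : F p2.
  apply/HF; exists 0, 1; split; first lra; split; first lra.
  apply: functional_extensionality => i; rewrite /vadd /vscale; ring.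
have p2nz : p2 <> vzero.
  move=> E. have := Hli 0 1. rewrite E.
  have -> : vadd (vscale 0 p1) (vscale 1 vzero) = vzero.
    apply: functional_extensionality => i; rewrite /vadd /vscale /vzero; ring.
  move=> /(_ erefl) [_]; lra.
set q := vsub (vscale (inner p2 p2) p1) (vscale (inner p1 p2) p2).
have qp2 : inner q p2 = 0.
  rewrite /q inner_subl !inner_scalel (inner_comm p1 p2); ring.
have qnz : q <> vzero.
  move=> E. have := Hli (inner p2 p2) (- inner p1 p2).
  have -> : vadd (vscale (inner p2 p2) p1) (vscale (- inner p1 p2) p2) = q.
    apply: functional_extensionality => i; rewrite /q /vadd /vsub /vscale; ring.
  move=> /(_ E) [H _]. have := inner_pos p2nz. lra.
have qp1 : inner q p1 <> 0.
  have Hqq : inner q q = inner p2 p2 * inner q p1.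
    rewrite {1}/q inner_subl !inner_scalel (inner_comm p1 q) (inner_comm p2 q) qp2; ring.
  have := inner_pos qnz. rewrite Hqq => H E. rewrite E in H. lra.
have uniq : forall a b c d, vadd (vscale a p1) (vscale b p2) = vadd (vscale c p1) (vscale d p2) -> a = c /\ b = d.
  move=> a b c d E. have := Hli (a - c) (b - d).
  have -> : vadd (vscale (a - c) p1) (vscale (b - d) p2) = vzero.
    apply: functional_extensionality => i.
    have := f_equal (fun f => f i) E. rewrite /vadd /vscale /vzero => Ei. lra.
  move=> /(_ erefl) [? ?]; split; lra.
set G := fun x : vec n => exists c, 0 <= c /\ x = vscale c p2.
have GF : forall x, G x -> F x.
  move=> x [c [Hc ->]]. apply/HF. exists 0, c; split; first lra; split => //.
  apply: functional_extensionality => i; rewrite /vadd /vscale; ring.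
have Gface : is_face K G.
  split; first by move=> x /GF /FK.
  split.
    move=> x Hx.
    have Fx : F x.
      apply: Fcl => eps Heps. have [y [Gy Hy]] := Hx eps Heps. exists y; split => //. exact: GF.
    have qx : inner q x = 0.
      rewrite inner_comm. apply: (@closed_hyperplane n x q G Hx) => y [c [_ ->]].
      by rewrite inner_scalel (inner_comm p2 q) qp2 Rmult_0_r.
    have [a [b [Ha [Hb Ex]]]] := proj1 (HF x) Fx.
    rewrite Ex inner_addr !inner_scaler qp2 in qx.
    have a0 : a = 0 by apply: NNPP => Ha0; apply: qp1; nra.
    exists b; split => //. rewrite Ex a0.
    apply: functional_extensionality => i; rewrite /vadd /vscale; ring.
  split.
    move=> x y t [c [Hc ->]] [d [Hd ->]] Ht. exists (t * c + (1 - t) * d); split; first nra.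
    apply: functional_extensionality => i; rewrite /vadd /vscale; ring.
  move=> x y z Gx Ky Kz Hseg.
  have [Fy Fz] := Fface x y z (GF x Gx) Ky Kz Hseg.
  have [a1 [b1 [Ha1 [Hb1 Ey]]]] := proj1 (HF y) Fy.
  have [a2 [b2 [Ha2 [Hb2 Ez]]]] := proj1 (HF z) Fz.
  have [c [Hc Ex]] := Gx.
  have [t [Ht Es]] := Hseg.
  have := uniq (t * a1 + (1 - t) * a2) (t * b1 + (1 - t) * b2) 0 c.
  case.
    rewrite -Ex Es Ey Ez.
    apply: functional_extensionality => i; rewrite /vadd /vscale; ring.
  move=> Ha _.
  have a10 : a1 = 0 by nra.
  have a20 : a2 = 0 by nra.
  split; [exists b1 | exists b2]; split => //; [rewrite Ey a10 | rewrite Ez a20];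
    apply: functional_extensionality => i; rewrite /vadd /vscale; ring.
have G0 : G vzero.
  exists 0; split; first lra. apply: functional_extensionality => i; rewrite /vzero /vscale; ring.
have Gp2 : G p2.
  exists 1; split; first lra. apply: functional_extensionality => i; rewrite /vscale; ring.
have nGp1 : ~ G p1.
  move=> [c [_ E]]. have := uniq 1 0 0 c.
  case; last lra.
  rewrite -E. apply: functional_extensionality => i; rewrite /vadd /vscale; ring.
have Kp1 : K p1 by apply: FK.
have [s [b [snz [Hsb Hs]]]] : exposed_face K G.
  apply: Hfe => //; first by exists vzero.
  move=> E. apply: nGp1. by apply/E.
have b0 : b = 0.
  have [_ <-] := proj1 (Hs vzero) G0. by rewrite inner_zeror.
subst b.
have sp2 : inner s p2 = 0 by have [_ ->] := proj1 (Hs p2) Gp2.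
have sp1 : 0 < inner s p1.
  have := Hsb p1 Kp1. case/Rle_lt_or_eq_dec => // E.
  exfalso. apply: nGp1. apply/Hs. by split.
exists (vscale (/ inner s p1) s). split.
  move=> x Kx. rewrite inner_scalel. apply: Rmult_le_pos; last exact: Hsb.
  apply: Rlt_le; apply: Rinv_0_lt_compat; lra.
rewrite !inner_scalel sp2. split; last ring. field; lra.
Qed.

Unset Implicit Arguments.

Theorem propositionA3 (n : nat) (K F : vec n -> Prop) (p1 p2 : vec n) :
  is_closed_convex_cone K ->
  facially_exposed K ->
  is_face K F ->
  lin_indep2 p1 p2 ->
  set_eq F (cone2 p1 p2) ->
  is_closed (minkowski_sum (dual_cone K) (perp F)).
Proof.
move=> HK Hfe Hface Hli HF.
have [y1 [Dy1 [y1p1 y1p2]]] := ray_functional HK Hfe Hface Hli HF.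
have Hli' : lin_indep2 p2 p1.
  move=> a b E. have H := Hli b a.
  have [? ?] : b = 0 /\ a = 0.
    apply: H. rewrite -E. apply: functional_extensionality => i; rewrite /vadd /vscale; ring.
  by split.
have HF' : set_eq F (cone2 p2 p1).
  move=> x. rewrite HF. split; move=> [a [b [Ha [Hb ->]]]]; exists b, a; do 2 split => //;
    apply: functional_extensionality => i; rewrite /vadd /vscale; ring.
have [y2 [Dy2 [y2p2 y2p1]]] := ray_functional HK Hfe Hface Hli' HF'.
have FK : Defs.subset F K by case: Hface.
have Fp1 : F p1.
  apply/HF; exists 1, 0; split; first lra; split; first lra.
  apply: functional_extensionality => i; rewrite /vadd /vscale; ring.
have Fp2 : F p2.
  apply/HF; exists 0, 1; split; first lra; split; first lra.
  apply: functional_extensionality => i; rewrite /vadd /vscale; ring.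
have Msum : forall p, F p -> forall y, minkowski_sum (dual_cone K) (perp F) y -> 0 <= inner y p.
  move=> p Fp y [a [b [Da [Pb ->]]]]. rewrite inner_addl (Pb p Fp) Rplus_0_r.
  exact: Da (FK p Fp).
move=> z Hz.
have za := @closed_halfspace n z p1 _ Hz (Msum p1 Fp1).
have zb := @closed_halfspace n z p2 _ Hz (Msum p2 Fp2).
set y := vadd (vscale (inner z p1) y1) (vscale (inner z p2) y2).
exists y, (vsub z y). split.
  move=> x Kx. rewrite /y inner_addl !inner_scalel.
  have := Dy1 x Kx. have := Dy2 x Kx. nra.
split.
  move=> x Fx. have [a [b [_ [_ ->]]]] := proj1 (HF x) Fx.
  rewrite inner_addr !inner_scaler !inner_subl /y !inner_addl !inner_scalel
    y1p1 y1p2 y2p1 y2p2. ring.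
apply: functional_extensionality => i; rewrite /vadd /vsub; ring.
Qed.
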